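(* Let $G$ be Boidol's group and consider the coadjoint orbit space $\mathfrak{g}^*/G$ with its quotient topology, partitioned into the sets $\Gamma_3,\Gamma_2,\Gamma_1,\Gamma_0$ described in the context. Then: (i) the relative topology of $\mathfrak{g}^*/G$ on $\Gamma_3$ is Hausdorff; (ii) each of the four subsets $\Gamma_{2,\varepsilon,\sigma}$, $\varepsilon,\sigma\in\{+,-\}$, is open in $\Gamma_2$ and Hausdorff in its relative topology; (iii) $\Gamma_1$ is discrete in its relative topology; (iv) $\Gamma_0$ is homeomorphic to $\mathbb{R}$ (via $\tau\mapsto\{\tau T^*\}$).
   Context: Boidol's group $G$ is the simply connected Lie group with Lie algebra $\mathfrak{g}$ having basis $T,X,Y,Z$ and non-trivial brackets $[T,X]=-X$, $[T,Y]=Y$, $[X,Y]=Z$; concretely $G=\mathbb{R}^4$ with product $(t,x,y,z)\cdot(t',x',y',z')=(t+t',\,e^{t'}x+x',\,e^{-t'}y+y',\,z+z'+\tfrac12(e^{t'}xy'-e^{-t'}x'y))$. Write elements of $\mathfrak{g}^*$ as $aT^*+bX^*+cY^*+dZ^*$ (dual basis). $G$ acts on $\mathfrak{g}^*$ by the coadjoint action, and the coadjoint orbits are exactly: (1) for $\rho\in\mathbb{R},\lambda\in\mathbb{R}\setminus\{0\}$: $O_{\rho,\lambda}=\{\frac{\rho\lambda+xy}{\lambda}T^*+xX^*+yY^*+\lambda Z^*: x,y\in\mathbb{R}\}$; (2) for $(\alpha,\beta)\in\mathbb{R}^2\setminus\{0\}$: $O_{\alpha,\beta,0}=\{uT^*+e^t\alpha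 X^*+e^{-t}\beta Y^*: t,u\in\mathbb{R}\}$; (3) for $\tau\in\mathbb{R}$ the singletons $\{\tau T^*\}$. Set $\Gamma_3=\{O_{\rho,\lambda}:\rho\in\mathbb{R},\lambda\neq0\}$; for $\varepsilon,\sigma\in\{+,-\}$ (identified with $\pm1$), $\Gamma_{2,\varepsilon,\sigma}=\{O_{\varepsilon\rho,\sigma,0}:\rho>0\}$ and $\Gamma_2=\bigcup_{\varepsilon,\sigma}\Gamma_{2,\varepsilon,\sigma}$ (the orbits $O_{\alpha,\beta,0}$ with $\alpha\beta\neq0$); $\Gamma_1=\{O_{1,0,0},O_{-1,0,0},O_{0,1,0},O_{0,-1,0}\}$; $\Gamma_0=\{\{\tau T^*\}:\tau\in\mathbb{R}\}$. The orbit space $\mathfrak{g}^*/G$ carries the quotient topology of $\mathfrak{g}^*$. *)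

(* Defs.v *)
From HB Require Import structures.
From mathcomp Require Import all_boot all_order all_algebra.
From mathcomp Require Import all_classical all_reals all_analysis.
Set Implicit Arguments. Unset Strict Implicit. Unset Printing Implicit Defensive.
Import Order.TTheory GRing.Theory Num.Theory.
Import numFieldNormedType.Exports.
Local Open Scope classical_set_scope.
Local Open Scope ring_scope.

Section Boidol.
Variable R : realType.

Definition grp := (R * R * R * R)%type.
(* g = Lie algebra, coordinates (s,a,b,c) w.r.t. the basis T,X,Y,Z. *)
Definition lie := (R * R * R * R)%type.
(* g^* , coordinates (a,b,c,d) meaning aT^*+bX^*+cY^*+dZ^*. *)
Definition dual := (R * R * R * R)%type.

Definition gmul (g h : grp) : grp :=
  let: (t, x, y, z) := g in let: (t', x', y', z') := h in
  (t + t', expR t' * x + x', expR (- t') * y + y',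
   z + z' + 2^-1 * (expR t' * x * y' - expR (- t') * x' * y)).

Definition ginv (g : grp) : grp :=
  let: (t, x, y, z) := g in (- t, - (expR (- t) * x), - (expR t * y), - z).

(* Adjoint action Ad(g) = differential at the identity (0,0,0,0) of
   h |-> g h g^{-1}, written in the basis T,X,Y,Z (= d/dt,d/dx,d/dy,d/dz at
   the identity; the corresponding left invariant fields satisfy
   [T,X]=-X, [T,Y]=Y, [X,Y]=Z). *)
Definition Ad (g : grp) (v : lie) : lie :=
  let: (t, x, y, z) := g in let: (s, a, b, c) := v in
  (s, expR (- t) * (a + s * x), expR t * (b - s * y),
   c + x * b - a * y - s * x * y).

Definition pair_dl (l : dual) (v : lie) : R :=
  let: (a, b, c, d) := l in let: (s, a', b', c') := v in
  a * s + b * a' + c * b' + d * c'.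

Definition eT : lie := (1, 0, 0, 0).
Definition eX : lie := (0, 1, 0, 0).
Definition eY : lie := (0, 0, 1, 0).
Definition eZ : lie := (0, 0, 0, 1).

Definition coadj (g : grp) (l : dual) : dual :=
  let f := fun V => pair_dl l (Ad (ginv g) V) in (f eT, f eX, f eY, f eZ).

Definition orbit (l : dual) : set dual := [set coadj g l | g in [set: grp]].

Definition orbits : set (set dual) := [set O | exists l, O = orbit l].

Definition qopen (U : set (set dual)) : Prop :=
  U `<=` orbits /\ open [set l : dual | U (orbit l)].

Definition ropen (S V : set (set dual)) : Prop :=
  exists U, qopen U /\ V = U `&` S.

Definition rhausdorff (S : set (set dual)) : Prop :=
  forall O1 O2, S O1 -> S O2 -> O1 <> O2 ->
    exists U1 U2, [/\ qopen U1, qopen U2, U1 O1, U2 O2 & U1 `&` U2 `&` S = set0].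

Definition rdiscrete (S : set (set dual)) : Prop :=
  forall V, V `<=` S -> ropen S V.

Definition O_rl (rho lam : R) : set dual :=
  [set l | exists x y, l = ((rho * lam + x * y) / lam, x, y, lam)].
Definition O_ab (alpha beta : R) : set dual :=
  [set l | exists t u, l = (u, expR t * alpha, expR (- t) * beta, 0)].
Definition O_tau (tau : R) : set dual := [set (tau, 0, 0, 0)].

Definition sgn (b : bool) : R := if b then 1 else -1.

Definition Gamma3 : set (set dual) :=
  [set O | exists rho lam, lam != 0 /\ O = O_rl rho lam].
Definition Gamma2es (eps sig : bool) : set (set dual) :=
  [set O | exists rho, 0 < rho /\ O = O_ab (sgn eps * rho) (sgn sig)].
Definition Gamma2 : set (set dual) :=
  [set O | exists eps sig, Gamma2es eps sig O].
Definition Gamma1 : set (set dual) :=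
  [set O | O = O_ab 1 0 \/ O = O_ab (-1) 0 \/ O = O_ab 0 1 \/ O = O_ab 0 (-1)].
Definition Gamma0 : set (set dual) := [set O | exists tau, O = O_tau tau].

Definition homeo_onto (f : R -> set dual) (S : set (set dual)) : Prop :=
  [/\ injective f, f @` [set: R] = S,
      (forall V, ropen S V -> open (f @^-1` V)) &
      (forall W : set R, open W -> ropen S (f @` W))].

End Boidol.

(* Main.v *)
Require Import Defs.
From HB Require Import structures.
From mathcomp Require Import all_boot all_order all_algebra.
From mathcomp Require Import all_classical all_reals all_analysis.
From mathcomp Require Import ring lra.
Import Order.TTheory GRing.Theory Num.Theory.
Import numFieldNormedType.Exports.
Local Open Scope classical_set_scope.
Local Open Scope ring_scope.

Set Implicit Arguments. Unset Strict Implicit.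
Section S.
Variable R : realType.
Implicit Types (l : dual R) (g : grp R).

Lemma cont_fst (A B : topologicalType) : continuous (@fst A B).
Proof. by move=> x; apply: cvg_fst. Qed.
Lemma cont_snd (A B : topologicalType) : continuous (@snd A B).
Proof. by move=> x; apply: cvg_snd. Qed.

Lemma cA : continuous (fun l : dual R => l.1.1.1).
Proof. move=> l. apply: (continuous_comp (f := fst) (g := fun p : R * R * R => p.1.1)). exact: cont_fst.
apply: (continuous_comp (f := fst) (g := fun p : R * R => p.1)); exact: cont_fst. Qed.
Lemma cB : continuous (fun l : dual R => l.1.1.2).
Proof. move=> l. apply: (continuous_comp (f := fst) (g := fun p : R * R * R => p.1.2)). exact: cont_fst.
apply: (continuous_comp (f := fst) (g := fun p : R * R => p.2)). exact: cont_fst. exact: cont_snd. Qed.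
Lemma cC : continuous (fun l : dual R => l.1.2).
Proof. move=> l. apply: (continuous_comp (f := fst) (g := fun p : R * R * R => p.2)). exact: cont_fst. exact: cont_snd. Qed.
Lemma cD : continuous (fun l : dual R => l.2).
Proof. exact: cont_snd. Qed.

Lemma cont_add (f h : dual R -> R) : continuous f -> continuous h -> continuous (fun l => f l + h l).
Proof. move=> cf ch x; exact: (continuousD (cf x) (ch x)). Qed.
Lemma cont_sub (f h : dual R -> R) : continuous f -> continuous h -> continuous (fun l => f l - h l).
Proof. move=> cf ch x; exact: (continuousB (cf x) (ch x)). Qed.
Lemma cont_mul (f h : dual R -> R) : continuous f -> continuous h -> continuous (fun l => f l * h l).
Proof. move=> cf ch x; exact: (continuousM (cf x) (ch x)). Qed.
Lemma cont_opp (f : dual R -> R) : continuous f -> continuous (fun l => - f l).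
Proof. move=> cf x; exact: (continuousN (cf x)). Qed.
Lemma cont_cst (c : R) : continuous (fun _ : dual R => c).
Proof. by move=> x; apply: cvg_cst. Qed.

Ltac contt := repeat first [ apply: cont_add | apply: cont_sub | apply: cont_mul | apply: cont_opp
  | exact: cA | exact: cB | exact: cC | exact: cD | exact: cont_cst ].

Lemma coadjE g l : coadj g l =
  (l.1.1.1 - l.1.1.2 * g.1.1.2 + l.1.2 * g.1.2 - l.2 * g.1.1.2 * g.1.2,
   expR g.1.1.1 * (l.1.1.2 + l.2 * g.1.2),
   expR (- g.1.1.1) * (l.1.2 - l.2 * g.1.1.2), l.2).
Proof.
case: g => [[[t x] y] z]; case: l => [[[A B] C] D].
rewrite /coadj /ginv /Ad /pair_dl /eT /eX /eY /eZ /= !opprK !expRN.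
have e : expR t != 0 by rewrite gt_eqF // expR_gt0.
congr (_, _, _, _); field => //.
Qed.


Lemma cont_ext (f h : dual R -> R) : (forall l, f l = h l) -> continuous h -> continuous f.
Proof. by move=> e; have -> : f = h by apply: funext. Qed.

Lemma cont_c1 g : continuous (fun l => (coadj g l).1.1.1).
Proof.
apply: (@cont_ext _ (fun l => l.1.1.1 - l.1.1.2 * g.1.1.2 + l.1.2 * g.1.2 - l.2 * g.1.1.2 * g.1.2)).
  by move=> l; rewrite coadjE.
contt. Qed.
Lemma cont_c2 g : continuous (fun l => (coadj g l).1.1.2).
Proof.
apply: (@cont_ext _ (fun l => expR g.1.1.1 * (l.1.1.2 + l.2 * g.1.2))).
  by move=> l; rewrite coadjE.
contt. Qed.
Lemma cont_c3 g : continuous (fun l => (coadj g l).1.2).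
Proof.
apply: (@cont_ext _ (fun l => expR (- g.1.1.1) * (l.1.2 - l.2 * g.1.1.2))).
  by move=> l; rewrite coadjE.
contt. Qed.
Lemma cont_c4 g : continuous (fun l => (coadj g l).2).
Proof.
apply: (@cont_ext _ (fun l => l.2)).
  by move=> l; rewrite coadjE.
contt. Qed.

Ltac contc := repeat first [ apply: cont_add | apply: cont_sub | apply: cont_mul | apply: cont_opp
  | exact: cont_c1 | exact: cont_c2 | exact: cont_c3 | exact: cont_c4 | exact: cont_cst ].

Definition sat (V : set (dual R)) : set (set (dual R)) :=
  [set O | orbits O /\ exists l, O l /\ V l].

Lemma qopen_sat V : (forall g, open [set l | V (coadj g l)]) -> qopen (sat V).
Proof.
move=> oV; split; first by move=> O [].
have -> : [set l | sat V (@Defs.orbit R l)] = \bigcup_(g in [set: grp R]) [set l | V (coadj g l)].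
  apply/seteqP; split => l /=.
  - by move=> [_ [l' [[g _ <-] Vl]]]; exists g.
  - move=> [g _ Vg]; split; first by exists l.
    by exists (coadj g l); split => //; exists g.
exact: bigcup_open.
Qed.

Lemma open_pre (f : dual R -> R) (W : set R) : continuous f -> open W -> open [set l | W (f l)].
Proof. move=> cf oW; exact: (proj1 (continuousP f) cf W oW). Qed.

Lemma orbit_rl rho lam : lam != 0 -> O_rl rho lam = @Defs.orbit R (rho, 0, 0, lam).
Proof.
move=> ln; apply/seteqP; split => l.
- move=> [x [y ->]]; exists (0, - (y / lam), x / lam, 0) => //.
  rewrite coadjE /= oppr0 expR0 !mul1r.
  congr (_, _, _, _); field => //.
- move=> [g _ <-]; rewrite coadjE /=.
  exists (expR g.1.1.1 * (0 + lam * g.1.2)), (expR (- g.1.1.1) * (0 - lam * g.1.1.2)).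
  rewrite expRN.
  have e : expR g.1.1.1 != 0 by rewrite gt_eqF // expR_gt0.
  congr (_, _, _, _); field => //; apply/andP; split => //.
Qed.

Lemma orbit_ab a b : (a != 0) || (b != 0) -> O_ab a b = @Defs.orbit R (0, a, b, 0).
Proof.
move=> hab; apply/seteqP; split => l.
- move=> [t [u ->]].
  have [a0|a0] := eqVneq a 0.
  + have b0 : b != 0 by move: hab; rewrite a0 eqxx.
    exists (t, 0, u / b, 0) => //; rewrite coadjE /=.
    congr (_, _, _, _); rewrite ?a0; field => //.
  + exists (t, - (u / a), 0, 0) => //; rewrite coadjE /=.
    congr (_, _, _, _); field => //.
- move=> [g _ <-]; rewrite coadjE /=.
  exists g.1.1.1, (0 - a * g.1.1.2 + b * g.1.2 - 0 * g.1.1.2 * g.1.2).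
  congr (_, _, _, _); ring.
Qed.

Lemma orbit_tau tau : O_tau tau = @Defs.orbit R (tau, 0, 0, 0).
Proof.
apply/seteqP; split => l.
- move=> ->; exists 0 => //; rewrite coadjE /=.
  congr (_, _, _, _); ring.
- move=> [g _ <-]; rewrite coadjE /= /O_tau /=.
  congr (_, _, _, _); ring.
Qed.

Lemma ab_elt a b l : O_ab a b l -> exists t, l.1.1.2 = expR t * a /\ l.1.2 = expR (- t) * b /\ l.2 = 0.
Proof. by move=> [t [u ->]]; exists t. Qed.

Lemma hsep (S : set (set (dual R))) (psi : dual R -> R) O1 O2 l1 l2 :
 orbits O1 -> orbits O2 -> O1 l1 -> O2 l2 -> psi l1 < psi l2 ->
 (forall g, continuous (fun l => psi (coadj g l))) ->
 (forall O, S O -> forall l l', O l -> O l' -> psi l = psi l') ->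
 exists U1 U2, [/\ qopen U1, qopen U2, U1 O1, U2 O2 & U1 `&` U2 `&` S = set0].
Proof.
move=> o1 o2 h1 h2 lt cg inv.
pose m := (psi l1 + psi l2) / 2.
exists (sat [set l | psi l < m]), (sat [set l | m < psi l]); split.
- by apply: qopen_sat => g; exact: (open_pre (cg g) (@open_lt _ m)).
- by apply: qopen_sat => g; exact: (open_pre (cg g) (@open_gt _ m)).
- by split => //; exists l1; split => //=; rewrite /m; lra.
- by split => //; exists l2; split => //=; rewrite /m; lra.
- apply/seteqP; split => // O [[[_ [l [Ol hl]]] [_ [l' [Ol' hl']]]] SO].
  have := inv O SO l l' Ol Ol'; move: hl hl' => /= hl hl'; lra.
Qed.

Lemma hsepN (S : set (set (dual R))) (psi : dual R -> R) O1 O2 l1 l2 :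
 orbits O1 -> orbits O2 -> O1 l1 -> O2 l2 -> psi l1 != psi l2 ->
 (forall g, continuous (fun l => psi (coadj g l))) ->
 (forall O, S O -> forall l l', O l -> O l' -> psi l = psi l') ->
 exists U1 U2, [/\ qopen U1, qopen U2, U1 O1, U2 O2 & U1 `&` U2 `&` S = set0].
Proof.
move=> o1 o2 h1 h2; case: ltgtP => // lt _ cg inv.
- exact: (hsep o1 o2 h1 h2 lt cg inv).
- have [U1 [U2 [q1 q2 u1 u2 e]]] := hsep o2 o1 h2 h1 lt cg inv.
  by exists U2, U1; split => //; rewrite (setIC U2).
Qed.


Lemma sgn_neq0 (b : bool) : sgn R b != 0.
Proof. by case: b => /=; rewrite ?oppr_eq0 oner_eq0. Qed.

Lemma part1 : rhausdorff (@Gamma3 R).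
Proof.
move=> O1 O2 [r1 [k1 [k1n ->]]] [r2 [k2 [k2n ->]]] neq.
have o1 : orbits (O_rl r1 k1) by exists (r1, 0, 0, k1); exact: orbit_rl.
have o2 : orbits (O_rl r2 k2) by exists (r2, 0, 0, k2); exact: orbit_rl.
have m1 : O_rl r1 k1 (r1, 0, 0, k1) by exists 0, 0; congr (_, _, _, _); field.
have m2 : O_rl r2 k2 (r2, 0, 0, k2) by exists 0, 0; congr (_, _, _, _); field.
have [ek|nk] := eqVneq k1 k2.
- subst k2.
  have nr : r1 != r2 by apply/eqP => er; apply: neq; rewrite er.
  apply: (hsepN (psi := fun l => l.1.1.1 * l.2 - l.1.1.2 * l.1.2) o1 o2 m1 m2).
  + rewrite /= !mulr0 !subr0; apply/eqP => /(mulIf k1n) /eqP; exact/negP.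
  + by move=> g /=; contc.
  + move=> O [r [k [kn ->]]] l l' [x [y ->]] [x' [y' ->]] /=.
    by rewrite !divfK // addrK addrK.
- apply: (hsepN (psi := fun l => l.2) o1 o2 m1 m2) => //.
  + by move=> g /=; contc.
  + by move=> O [r [k [kn ->]]] l l' [x [y ->]] [x' [y' ->]].
Qed.


Lemma sgn_sq (b : bool) : sgn R b * sgn R b = 1.
Proof. by case: b => /=; rewrite ?mulrNN mulr1. Qed.

Lemma part2 eps sig :
  @Gamma2es R eps sig `<=` @Gamma2 R /\
  @ropen R (@Gamma2 R) (@Gamma2es R eps sig) /\
  @rhausdorff R (@Gamma2es R eps sig).
Proof.
split; first by move=> O h; exists eps, sig.
split.
- exists (sat [set l | 0 < sgn R eps * l.1.1.2 /\ 0 < sgn R sig * l.1.2]); split.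
    apply: qopen_sat => g.
    apply: openI.
      by apply: (open_pre _ (@open_gt _ 0)); contc.
    by apply: (open_pre _ (@open_gt _ 0)); contc.
  apply/seteqP; split => O.
  + move=> [rho [rp ->]]; split; last by exists eps, sig, rho.
    split.
      exists (0, sgn R eps * rho, sgn R sig, 0); apply: orbit_ab.
      by rewrite sgn_neq0 orbT.
    exists (0, sgn R eps * rho, sgn R sig, 0); split.
      by exists 0, 0; rewrite oppr0 expR0 !mul1r.
    by rewrite /= mulrA sgn_sq mul1r sgn_sq.
  + move=> [[_ [l [Ol [p1 p2]]]] [e [s [rho [rp eO]]]]].
    rewrite eO in Ol; have [t [e1 [e2 _]]] := ab_elt Ol.
    have E1 := expR_gt0 t; have E2 := expR_gt0 (- t).
    rewrite e1 in p1; rewrite e2 in p2.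
    clear Ol e1 e2; case: eps e sig s p1 p2 eO => [] [] [] [] /= p1 p2 eO;
      try (exfalso; nra); by exists rho.
- move=> O1 O2 [r1 [rp1 ->]] [r2 [rp2 ->]] neq.
  have hn : (sgn R eps * r1 != 0) || (sgn R sig != 0) by rewrite sgn_neq0 orbT.
  have hn2 : (sgn R eps * r2 != 0) || (sgn R sig != 0) by rewrite sgn_neq0 orbT.
  have o1 : orbits (O_ab (sgn R eps * r1) (sgn R sig)) by eexists; exact: orbit_ab hn.
  have o2 : orbits (O_ab (sgn R eps * r2) (sgn R sig)) by eexists; exact: orbit_ab hn2.
  have m1 : O_ab (sgn R eps * r1) (sgn R sig) (0, sgn R eps * r1, sgn R sig, 0).
    by exists 0, 0; rewrite oppr0 expR0 !mul1r.
  have m2 : O_ab (sgn R eps * r2) (sgn R sig) (0, sgn R eps * r2, sgn R sig, 0).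
    by exists 0, 0; rewrite oppr0 expR0 !mul1r.
  apply: (hsepN (psi := fun l => l.1.1.2 * l.1.2) o1 o2 m1 m2).
  + rewrite /=; apply/eqP => /(mulIf (sgn_neq0 sig)) /(mulfI (sgn_neq0 eps)) er.
    by apply: neq; rewrite er.
  + by move=> g /=; contc.
  + move=> O [r [rp ->]] l l' [t [u ->]] [t' [u' ->]] /=.
    rewrite mulrACA expRxMexpNx_1 mulrACA expRxMexpNx_1.
    by rewrite !mul1r.
Qed.


Lemma qopen_and (P : Prop) (U : set (set (dual R))) : qopen U -> qopen [set O | P /\ U O].
Proof.
move=> [sU oU]; split; first by move=> O [_ /sU].
have [p|np] := pselect P.
  have -> : [set l | [set O | P /\ U O] (@Defs.orbit R l)] = [set l | U (@Defs.orbit R l)].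
    by apply/seteqP; split => l /=; [case | split].
  exact: oU.
have -> : [set l | [set O | P /\ U O] (@Defs.orbit R l)] = set0.
  by apply/seteqP; split => l //= [].
exact: open0.
Qed.

Lemma qopen_or (U1 U2 : set (set (dual R))) : qopen U1 -> qopen U2 -> qopen (U1 `|` U2).
Proof.
move=> [s1 o1] [s2 o2]; split; first by move=> O [/s1|/s2].
exact: (openU o1 o2).
Qed.

Lemma part3 : rdiscrete (@Gamma1 R).
Proof.
move=> V sV.
exists ([set O | V (O_ab 1 0) /\ sat [set l | 0 < l.1.1.2] O] `|`
       ([set O | V (O_ab (-1) 0) /\ sat [set l | l.1.1.2 < 0] O] `|`
       ([set O | V (O_ab 0 1) /\ sat [set l | 0 < l.1.2] O] `|`
        [set O | V (O_ab 0 (-1)) /\ sat [set l | l.1.2 < 0] O]))).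
split.
  apply: qopen_or; [|apply: qopen_or; [|apply: qopen_or]]; apply: qopen_and;
    apply: qopen_sat => g; first [apply: (open_pre _ (@open_gt _ 0)) | apply: (open_pre _ (@open_lt _ 0))]; contc.
have o10 : O_ab 1 0 = @Defs.orbit R (0, 1, 0, 0) by apply: orbit_ab; rewrite oner_eq0.
have o20 : O_ab (-1) 0 = @Defs.orbit R (0, -1, 0, 0) by apply: orbit_ab; rewrite oppr_eq0 oner_eq0.
have o30 : O_ab 0 1 = @Defs.orbit R (0, 0, 1, 0) by apply: orbit_ab; rewrite oner_eq0 orbT.
have o40 : O_ab 0 (-1) = @Defs.orbit R (0, 0, -1, 0) by apply: orbit_ab; rewrite oppr_eq0 oner_eq0 orbT.
have mem a b : O_ab a b (0, a, b, 0) by exists 0, 0; rewrite oppr0 expR0 !mul1r.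
apply/seteqP; split => O.
- move=> VO; split; last exact: sV.
  case: (sV O VO) => [eO|[eO|[eO|eO]]]; subst O.
  + left; split => //.
    split; first by eexists; exact: o10.
    by exists (0, 1, 0, 0); split => //=; rewrite ltr01.
  + right; left; split => //.
    split; first by eexists; exact: o20.
    by exists (0, -1, 0, 0); split => //=; rewrite ltrN10.
  + right; right; left; split => //.
    split; first by eexists; exact: o30.
    by exists (0, 0, 1, 0); split => //=; rewrite ltr01.
  + right; right; right; split => //.
    split; first by eexists; exact: o40.
    by exists (0, 0, -1, 0); split => //=; rewrite ltrN10.
- move=> [[[VO [_ [l [Ol hl]]]] | [[VO [_ [l [Ol hl]]]] | [[VO [_ [l [Ol hl]]]] | [VO [_ [l [Ol hl]]]]]]] G1].
  all: case: G1 => [eO|[eO|[eO|eO]]].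
  all: rewrite eO; rewrite eO in Ol; try done.
  all: exfalso; have [t [e1 [e2 _]]] := ab_elt Ol; have E1 := expR_gt0 t.
  all: have E2 := expR_gt0 (- t); move: hl => /=; rewrite ?e1 ?e2; nra.
Qed.


Lemma cont_q (T U V : topologicalType) (f : T -> U) (h : T -> V) : continuous f -> continuous h -> continuous (fun t => (f t, h t)).
Proof. move=> cf ch t. exact: (cvg_pair (cf t) (ch t)). Qed.

Lemma cont_tau : continuous (fun t : R => (t, 0, 0, 0) : dual R).
Proof.
apply: cont_q; last exact: cst_continuous.
apply: cont_q; last exact: cst_continuous.
apply: cont_q; last exact: cst_continuous.
by move=> x.
Qed.

Lemma part4 : homeo_onto (@O_tau R) (@Gamma0 R).
Proof.
split.
- move=> a b h.
  have : O_tau b (a, 0, 0, 0) by rewrite -h.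
  by case.
- apply/seteqP; split => O; first by move=> [t _ <-]; exists t.
  by move=> [t ->]; exists t.
- move=> V [U [[sU oU] ->]].
  have -> : (@O_tau R) @^-1` (U `&` @Gamma0 R) = (fun t : R => (t, 0, 0, 0) : dual R) @^-1` [set l | U (@Defs.orbit R l)].
    apply/seteqP; split => t /=; rewrite -orbit_tau.
      by case.
    by move=> Ut; split => //; exists t.
  exact: (proj1 (continuousP _) cont_tau _ oU).
- move=> W oW.
  exists (sat [set l | W l.1.1.1]); split.
    apply: qopen_sat => g; apply: open_pre oW; contc.
  apply/seteqP; split => O.
  + move=> [t Wt <-]; split; last by exists t.
    split; first by eexists; exact: orbit_tau.
    by exists (t, 0, 0, 0).
  + move=> [[_ [l [Ol Wl]]] [t eO]].
    rewrite eO in Ol; rewrite Ol in Wl.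
    by exists t.
Qed.

End S.
Unset Implicit Arguments.

Theorem proposition2p2 (R : realType) :
  [/\ @rhausdorff R (@Gamma3 R),
      (forall eps sig : bool,
         @Gamma2es R eps sig `<=` @Gamma2 R /\
         @ropen R (@Gamma2 R) (@Gamma2es R eps sig) /\
         @rhausdorff R (@Gamma2es R eps sig)),
      @rdiscrete R (@Gamma1 R) &
      @homeo_onto R (@O_tau R) (@Gamma0 R)].
Proof.
split.
- exact: part1.
- exact: part2.
- exact: part3.
- exact: part4.
Qed.
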